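(* Assume (H1) and (H2) as in the context. Let $G:S^1\times(a,b)\to\mathbb{R}$ be $G(\zeta,s)=\langle\varphi(1,s),\zeta\rangle$, with $G_s,G_{ss}$ its first and second partial derivatives in $s$. Then for every $\zeta=(\zeta_1,\zeta_2)\in S^1$ and every $s\in(a,b)$, $$\alpha_1^2\det\big(\zeta_1\varphi_1''(1,s)+\zeta_2\varphi_2''(1,s)\big)=m(m-\alpha_1)(GG_{ss})(\zeta,s)+\alpha_2(\alpha_1-\alpha_2)\,s\,(G_sG_{ss})(\zeta,s)-(m-\alpha_2)^2G_s^2(\zeta,s).$$
   Context: Fix $\alpha_1,\alpha_2>0$ with $\alpha_1\neq\alpha_2$. For $t>0$ and $x=(x_1,x_2)\in\mathbb{R}^2$ put $t\bullet x=(t^{\alpha_1}x_1,t^{\alpha_2}x_2)$. For $a<b$ let $V^{a,b}=\{t\bullet(1,s):a<s<b,\ t>0\}$ and $\varphi=(\varphi_1,\varphi_2):V^{a,b}\to\mathbb{R}^2$; $\varphi_j''(x)$ denotes the Hessian of $\varphi_j$ at $x$. (H1) $\varphi$ is real analytic on $V^{a,b}$. (H2) For some $m\ge3(\alpha_1+\alpha_2)$, $\varphi(t\bullet x)=t^m\varphi(x)$ for all $x\in V^{a,b}$, $t>0$. *)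

(* Defs.v *)
From Stdlib Require Import Reals Lra.
From Coquelicot Require Import Coquelicot.
Open Scope R_scope.

Definition dil (a1 a2 t : R) (x : R * R) : R * R :=
  (Rpower t a1 * fst x, Rpower t a2 * snd x).

Definition Vab (a1 a2 a b : R) (x : R * R) : Prop :=
  exists t s, 0 < t /\ a < s < b /\ x = dil a1 a2 t (1, s).

(* Real analyticity of f : R^2 -> R at x0: near x0, f is the sum of an
   absolutely convergent double power series centred at x0. *)
Definition analytic_at (f : R * R -> R) (x0 : R * R) : Prop :=
  exists (r : R) (c : nat -> nat -> R), 0 < r /\
    forall x : R * R,
      Rabs (fst x - fst x0) < r -> Rabs (snd x - snd x0) < r ->
      (forall i, ex_series (fun j =>
          Rabs (c i j) * Rabs (fst x - fst x0) ^ i * Rabs (snd x - snd x0) ^ j)) /\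
      ex_series (fun i => Series (fun j =>
          Rabs (c i j) * Rabs (fst x - fst x0) ^ i * Rabs (snd x - snd x0) ^ j)) /\
      f x = Series (fun i => Series (fun j =>
          c i j * (fst x - fst x0) ^ i * (snd x - snd x0) ^ j)).

Definition analytic_on (U : R * R -> Prop) (f : R * R -> R) : Prop :=
  forall x, U x -> analytic_at f x.

Definition d1 (f : R * R -> R) (x : R * R) : R :=
  Derive (fun u => f (u, snd x)) (fst x).
Definition d2 (f : R * R -> R) (x : R * R) : R :=
  Derive (fun v => f (fst x, v)) (snd x).

(* Hessian entries: hess i j f x = d_j (d_i f) (x) (row i, column j). *)
Definition hess (i j : nat) (f : R * R -> R) (x : R * R) : R :=
  let g := if Nat.eqb i 1 then d1 f else d2 f in
  if Nat.eqb j 1 then d1 g x else d2 g x.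

Definition det_comb_hess (z1 z2 : R) (f1 f2 : R * R -> R) (x : R * R) : R :=
  let A i j := z1 * hess i j f1 x + z2 * hess i j f2 x in
  A 1%nat 1%nat * A 2%nat 2%nat - A 1%nat 2%nat * A 2%nat 1%nat.

(* Main.v *)
Require Import Defs.
From Stdlib Require Import Reals Lra.
From Coquelicot Require Import Coquelicot.
Open Scope R_scope.

Lemma locally_open (x d y : R) (P : R -> Prop) :
  Rabs (y - x) < d -> (forall z, Rabs (z - x) < d -> P z) -> locally y P.
Proof.
  intros hy HP.
  assert (hp : 0 < d - Rabs (y - x)) by lra.
  exists (mkposreal _ hp). intros z hz. apply HP.
  change (Rabs (z - y) < d - Rabs (y - x)) in hz.
  replace (z - x) with ((z - y) + (y - x)) by ring.
  eapply Rle_lt_trans; [apply Rabs_triang|]. lra.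
Qed.

Lemma Series_zero : Series (fun _ => 0) = 0.
Proof.
  apply is_series_unique.
  assert (H := is_series_scal_r 0 _ _ (is_series_geom 0 ltac:(rewrite Rabs_R0; lra))).
  replace (/ (1 - 0) * 0) with 0 in H by field.
  eapply is_series_ext; [|exact H].
  intros n; simpl; ring.
Qed.

Lemma g_smooth f s : analytic_at f (1, s) -> exists r, 0 < r /\
  forall v, Rabs (v - s) < r ->
    ex_derive (fun v => f (1, v)) v /\ ex_derive (Derive (fun v => f (1, v))) v.
Proof.
  intros [r [c [hr H]]].
  set (A := c 0%nat).
  assert (E : forall v, Rabs (v - s) < r -> f (1, v) = PSeries A (v - s)).
  { intros v hv. destruct (H (1, v)) as [_ [_ ->]]; simpl;
      [rewrite Rminus_diag, Rabs_R0; auto | auto |].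
    apply is_series_unique. apply is_series_decr_1.
    match goal with |- is_series _ ?l => replace l with 0 end.
    - assert (H0 := is_series_scal_r 0 _ _ (is_series_geom 0 ltac:(rewrite Rabs_R0; lra))).
      replace (/ (1 - 0) * 0) with 0 in H0 by field.
      eapply is_series_ext; [|exact H0].
      intros n; simpl. transitivity (Series (fun _ => 0)).
      + rewrite Series_zero; ring.
      + apply Series_ext. intros j. ring.
    - unfold PSeries, plus, opp; simpl.
      rewrite (Series_ext (fun j => c 0%nat j * 1 * (v - s) ^ j) (fun k => A k * (v - s) ^ k)).
      + ring.
      + intros; unfold A; ring. }
  assert (Rad : forall y, Rabs y < r -> Rbar_lt (Rabs y) (CV_radius A)).
  { intros y hy. set (y' := (Rabs y + r) / 2).
    assert (hy' : 0 <= y') by (unfold y'; pose proof (Rabs_pos y); lra).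
    assert (Hd : CV_disk A y').
    { destruct (H (1, s + y')) as [H0 _]; simpl.
      - rewrite Rminus_diag, Rabs_R0; auto.
      - replace (s + y' - s) with y' by ring. rewrite Rabs_pos_eq by lra. unfold y'; lra.
      - specialize (H0 0%nat). eapply ex_series_ext; [|exact H0].
        intros n; simpl. rewrite Rabs_mult, <- RPow_abs.
        replace (s + y' - s) with y' by ring. unfold A; ring. }
    assert (Hle : Rbar_le y' (CV_radius A)) by exact (proj1 (Lub_Rbar_correct _) y' Hd).
    eapply Rbar_lt_le_trans; [|exact Hle]. simpl. unfold y'; lra. }
  exists r. split; [exact hr|]. intros v hv.
  assert (L1 : forall v, Rabs (v - s) < r ->
     locally v (fun t => PSeries A (t - s) = f (1, t))).
  { intros v0 hv0. apply (locally_open s r v0); auto. intros z hz. symmetry; auto. }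
  assert (D1 : forall v, Rabs (v - s) < r ->
     Derive (fun t => f (1, t)) v = PSeries (PS_derive A) (v - s)).
  { intros v0 hv0. transitivity (Derive (fun t => PSeries A (t - s)) v0).
    { symmetry; apply Derive_ext_loc, L1; auto. }
    apply is_derive_unique. auto_derive.
    - apply ex_derive_PSeries. auto.
    - rewrite Rmult_1_l. apply Derive_PSeries. auto. }
  split.
  - eapply ex_derive_ext_loc; [exact (L1 v hv)|].
    auto_derive. apply ex_derive_PSeries. auto.
  - apply (ex_derive_ext_loc (fun t => PSeries (PS_derive A) (t - s))).
    + apply (locally_open s r v); [exact hv|]. intros z hz. symmetry; exact (D1 z hz).
    + auto_derive. apply ex_derive_PSeries. rewrite CV_radius_derive. auto.
Qed.
Lemma Rpower1 c : Rpower 1 c = 1.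
Proof. unfold Rpower. rewrite ln_1, Rmult_0_r, exp_0. reflexivity. Qed.

Lemma hom (a1 a2 a b m : R) (f : R * R -> R) (ha1 : 0 < a1)
  (H2 : forall x t, Vab a1 a2 a b x -> 0 < t -> f (dil a1 a2 t x) = Rpower t m * f x)
  u v : 0 < u -> a < v * Rpower u (-(a2/a1)) < b ->
  f (u, v) = Rpower u (m/a1) * f (1, v * Rpower u (-(a2/a1))).
Proof.
  intros hu hw.
  set (w := v * Rpower u (-(a2/a1))) in *.
  assert (Vw : Vab a1 a2 a b (1, w)).
  { exists 1, w. split; [lra|]. split; [exact hw|].
    unfold dil; simpl. rewrite !Rpower1. f_equal; ring. }
  assert (ht : 0 < Rpower u (/ a1)) by apply exp_pos.
  pose proof (H2 _ _ Vw ht) as E.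
  unfold dil in E; simpl in E.
  rewrite !Rpower_mult in E.
  replace (/ a1 * a1) with 1 in E by (field; lra).
  rewrite Rpower_1 in E by exact hu.
  replace (Rpower u (/ a1 * a2) * w) with v in E.
  - replace (u * 1) with u in E by ring. rewrite E. f_equal. unfold Rdiv. f_equal. ring.
  - unfold w. rewrite Rmult_comm, Rmult_assoc, <- Rpower_plus.
    replace (- (a2 / a1) + / a1 * a2) with 0 by (field; lra).
    rewrite Rpower_O by exact hu. ring.
Qed.

Ltac etafix f := try change (fun x : R => Derive (fun v : R => f (1, v)) x) with (Derive (fun v : R => f (1, v))).

Lemma abs_small u e : Rabs (u - 1) < e -> e <= 1/2 -> 0 < u.
Proof. intros h he. apply Rabs_def2 in h. lra. Qed.

Lemma hess_vals (a1 a2 a b m s dd : R) (f : R * R -> R) (ha1 : 0 < a1)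
  (H2 : forall x t, Vab a1 a2 a b x -> 0 < t -> f (dil a1 a2 t x) = Rpower t m * f x)
  (hs : a < s < b) (hdd : 0 < dd)
  (Hg : forall v, Rabs (v - s) < dd ->
     ex_derive (fun v => f (1, v)) v /\ ex_derive (Derive (fun v => f (1, v))) v) :
  let mu := m / a1 in let be := a2 / a1 in
  let g0 := f (1, s) in
  let g1 := Derive (fun v => f (1, v)) s in
  let g2 := Derive (Derive (fun v => f (1, v))) s in
  hess 1 1 f (1, s) = mu * (mu - 1) * g0 - be * s * (2 * mu - 1 - be) * g1 + be ^ 2 * s ^ 2 * g2 /\
  hess 1 2 f (1, s) = (mu - be) * g1 - be * s * g2 /\
  hess 2 1 f (1, s) = (mu - be) * g1 - be * s * g2 /\
  hess 2 2 f (1, s) = g2.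
Proof.
  intros mu be g0 g1 g2.
  set (g := fun v => f (1, v)) in *.
  set (dl := Rmin dd (Rmin (s - a) (b - s))).
  assert (hdl : 0 < dl).
  { unfold dl. apply Rmin_glb_lt; [lra|]. apply Rmin_glb_lt; lra. }
  assert (dl1 : dl <= dd) by apply Rmin_l.
  assert (dl2 : dl <= s - a) by (unfold dl; eapply Rle_trans; [apply Rmin_r|apply Rmin_l]).
  assert (dl3 : dl <= b - s) by (unfold dl; eapply Rle_trans; [apply Rmin_r|apply Rmin_r]).
  assert (Hc : continuity_2d_pt (fun u v => v * Rpower u (-be)) 1 s).
  { apply continuity_2d_pt_mult. apply continuity_2d_pt_id2.
    apply (continuity_1d_2d_pt_comp (fun x => Rpower x (-be)) (fun u v => u)).
    - apply derivable_continuous_pt. exists (-be * Rpower 1 (-be - 1)).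
      apply derivable_pt_lim_power; lra.
    - apply continuity_2d_pt_id1. }
  destruct (Hc (mkposreal dl hdl)) as [d Hd]. simpl in Hd.
  set (e2 := Rmin d (1/2)).
  assert (he2 : 0 < e2) by (unfold e2; apply Rmin_glb_lt; [apply cond_pos|lra]).
  assert (e2a : e2 <= d) by apply Rmin_l.
  assert (e2b : e2 <= 1/2) by apply Rmin_r.
  assert (Reg : forall u v, Rabs (u - 1) < e2 -> Rabs (v - s) < e2 ->
            0 < u /\ Rabs (v * Rpower u (-be) - s) < dl).
  { intros u v hu hv. split; [eapply abs_small; eauto|].
    pose proof (Hd u v ltac:(lra) ltac:(lra)) as K.
    rewrite Rpower1, Rmult_1_r in K. exact K. }
  assert (EQ : forall u v, Rabs (u - 1) < e2 -> Rabs (v - s) < e2 ->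
            f (u, v) = Rpower u mu * g (v * Rpower u (-be))).
  { intros u v hu hv. destruct (Reg u v hu hv) as [u0 hw].
    apply Rabs_def2 in hw. unfold mu, be in *. apply (hom a1 a2 a b m f ha1 H2); auto. lra. }
  assert (Gd : forall u v, Rabs (u - 1) < e2 -> Rabs (v - s) < e2 ->
            ex_derive g (v * Rpower u (-be)) /\ ex_derive (Derive g) (v * Rpower u (-be))).
  { intros u v hu hv. destruct (Reg u v hu hv) as [u0 hw]. apply Hg. lra. }
  assert (LU : forall u v, Rabs (u - 1) < e2 -> Rabs (v - s) < e2 ->
     Defs.d1 f (u, v) = mu / u * Rpower u mu * g (v * Rpower u (-be))
        + Rpower u mu * (v * (-be / u * Rpower u (-be))) * Derive g (v * Rpower u (-be))).
  { intros u v hu hv. destruct (Reg u v hu hv) as [u0 _].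
    destruct (Gd u v hu hv) as [G1 _].
    unfold Defs.d1; simpl.
    transitivity (Derive (fun u' => Rpower u' mu * g (v * Rpower u' (-be))) u).
    { apply Derive_ext_loc. apply (locally_open 1 e2 u _ hu). intros z hz. apply EQ; auto. }
    apply is_derive_unique. unfold Rpower in *. auto_derive.
    - repeat split; auto.
    - unfold g; cbv beta. field. lra. }
  assert (LV : forall u v, Rabs (u - 1) < e2 -> Rabs (v - s) < e2 ->
     Defs.d2 f (u, v) = Rpower u mu * (Rpower u (-be) * Derive g (v * Rpower u (-be)))).
  { intros u v hu hv. destruct (Reg u v hu hv) as [u0 _].
    destruct (Gd u v hu hv) as [G1 _].
    unfold Defs.d2; simpl.
    transitivity (Derive (fun v' => Rpower u mu * g (v' * Rpower u (-be))) v).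
    { apply Derive_ext_loc. apply (locally_open s e2 v _ hv). intros z hz. apply EQ; auto. }
    apply is_derive_unique. unfold Rpower in *. auto_derive.
    - repeat split; auto.
    - unfold g; cbv beta. ring. }
  assert (h0 : Rabs (1 - 1) < e2) by (rewrite Rminus_diag, Rabs_R0; lra).
  assert (hs0 : Rabs (s - s) < e2) by (rewrite Rminus_diag, Rabs_R0; lra).
  destruct (Hg s ltac:(rewrite Rminus_diag, Rabs_R0; lra)) as [Gs1 Gs2].
  split; [|split; [|split]].
  - unfold hess; simpl. unfold Defs.d1 at 1; simpl.
    transitivity (Derive (fun u => mu / u * Rpower u mu * g (s * Rpower u (-be))
        + Rpower u mu * (s * (-be / u * Rpower u (-be))) * Derive g (s * Rpower u (-be))) 1).
    { apply Derive_ext_loc. apply (locally_open 1 e2 1 _ h0). intros z hz. apply LU; auto. }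
    apply is_derive_unique. unfold Rpower.
    auto_derive.
    + rewrite ln_1, !Rmult_0_r, exp_0, !Rmult_1_r. repeat split; auto; lra.
    + rewrite ln_1, !Rmult_0_r, exp_0, !Rmult_1_r. unfold g0, g1, g2, g; cbv beta. etafix f. field.
  - unfold hess; simpl. unfold Defs.d2 at 1; simpl.
    transitivity (Derive (fun v => mu * g v - be * v * Derive g v) s).
    { apply Derive_ext_loc. apply (locally_open s e2 s _ hs0). intros z hz.
      rewrite LU by auto. rewrite !Rpower1, !Rmult_1_r. field. }
    apply is_derive_unique. auto_derive.
    + repeat split; auto.
    + unfold g1, g2, g; cbv beta. etafix f. ring.
  - unfold hess; simpl. unfold Defs.d1 at 1; simpl.
    transitivity (Derive (fun u => Rpower u mu * (Rpower u (-be) * Derive g (s * Rpower u (-be)))) 1).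
    { apply Derive_ext_loc. apply (locally_open 1 e2 1 _ h0). intros z hz. apply LV; auto. }
    apply is_derive_unique. unfold Rpower.
    auto_derive.
    + rewrite ln_1, !Rmult_0_r, exp_0, !Rmult_1_r. repeat split; auto; lra.
    + rewrite ln_1, !Rmult_0_r, exp_0, !Rmult_1_r. unfold g1, g2, g; cbv beta. etafix f. field.
  - unfold hess; simpl. reflexivity.
Qed.

Lemma Dlin (g1 g2 : R -> R) z1 z2 u : ex_derive g1 u -> ex_derive g2 u ->
  Derive (fun x => g1 x * z1 + g2 x * z2) u = Derive g1 u * z1 + Derive g2 u * z2.
Proof.
  intros h1 h2. apply is_derive_unique. auto_derive.
  - auto.
  - change (fun x : R => g1 x) with g1. change (fun x : R => g2 x) with g2. ring.
Qed.

Theorem lemma2p3 (a1 a2 a b m : R) (phi1 phi2 : R * R -> R)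
  (ha1 : 0 < a1) (ha2 : 0 < a2) (ha12 : a1 <> a2) (hab : a < b)
  (H1_1 : analytic_on (Vab a1 a2 a b) phi1)
  (H1_2 : analytic_on (Vab a1 a2 a b) phi2)
  (hm : 3 * (a1 + a2) <= m)
  (H2_1 : forall x t, Vab a1 a2 a b x -> 0 < t ->
            phi1 (dil a1 a2 t x) = Rpower t m * phi1 x)
  (H2_2 : forall x t, Vab a1 a2 a b x -> 0 < t ->
            phi2 (dil a1 a2 t x) = Rpower t m * phi2 x) :
  let G := fun (z : R * R) (s : R) => phi1 (1, s) * fst z + phi2 (1, s) * snd z in
  forall (z : R * R) (s : R),
    fst z ^ 2 + snd z ^ 2 = 1 -> a < s < b ->
    let Gs := Derive (G z) s in
    let Gss := Derive (fun u => Derive (G z) u) s in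
    a1 ^ 2 * det_comb_hess (fst z) (snd z) phi1 phi2 (1, s)
    = m * (m - a1) * (G z s * Gss)
      + a2 * (a1 - a2) * s * (Gs * Gss)
      - (m - a2) ^ 2 * Gs ^ 2.
Proof.
  intros G z s _ hs Gs Gss.
  assert (V1 : Vab a1 a2 a b (1, s)).
  { exists 1, s. split; [lra|]. split; [exact hs|]. unfold dil; simpl.
    rewrite !Rpower1. f_equal; ring. }
  destruct (g_smooth phi1 s (H1_1 _ V1)) as [r1 [hr1 K1]].
  destruct (g_smooth phi2 s (H1_2 _ V1)) as [r2 [hr2 K2]].
  set (dd := Rmin r1 r2).
  assert (hdd : 0 < dd) by (apply Rmin_glb_lt; auto).
  assert (K1' : forall v, Rabs (v - s) < dd ->
     ex_derive (fun v => phi1 (1, v)) v /\ ex_derive (Derive (fun v => phi1 (1, v))) v).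
  { intros v hv. apply K1. pose proof (Rmin_l r1 r2). unfold dd in hv. lra. }
  assert (K2' : forall v, Rabs (v - s) < dd ->
     ex_derive (fun v => phi2 (1, v)) v /\ ex_derive (Derive (fun v => phi2 (1, v))) v).
  { intros v hv. apply K2. pose proof (Rmin_r r1 r2). unfold dd in hv. lra. }
  pose proof (hess_vals a1 a2 a b m s dd phi1 ha1 H2_1 hs hdd K1') as HV1.
  pose proof (hess_vals a1 a2 a b m s dd phi2 ha1 H2_2 hs hdd K2') as HV2.
  cbv zeta in HV1, HV2.
  destruct HV1 as [A11 [A12 [A21 A22]]].
  destruct HV2 as [B11 [B12 [B21 B22]]].
  assert (DG : forall u, Rabs (u - s) < dd -> Derive (G z) u =
     Derive (fun v => phi1 (1, v)) u * fst z + Derive (fun v => phi2 (1, v)) u * snd z).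
  { intros u hu. exact (Dlin (fun v => phi1 (1, v)) (fun v => phi2 (1, v)) _ _ u
       (proj1 (K1' u hu)) (proj1 (K2' u hu))). }
  assert (hs0 : Rabs (s - s) < dd) by (rewrite Rminus_diag, Rabs_R0; lra).
  assert (EGs : Gs = Derive (fun v => phi1 (1, v)) s * fst z + Derive (fun v => phi2 (1, v)) s * snd z).
  { unfold Gs. apply DG. exact hs0. }
  assert (EGss : Gss = Derive (Derive (fun v => phi1 (1, v))) s * fst z
                     + Derive (Derive (fun v => phi2 (1, v))) s * snd z).
  { unfold Gss.
    transitivity (Derive (fun u => Derive (fun v => phi1 (1, v)) u * fst z
                     + Derive (fun v => phi2 (1, v)) u * snd z) s).
    { apply Derive_ext_loc. apply (locally_open s dd s _ hs0). intros w hw. apply DG; auto. }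
    apply Dlin; [apply (K1' s hs0)|apply (K2' s hs0)]. }
  rewrite EGs, EGss. unfold det_comb_hess. cbv zeta.
  rewrite A11, A12, A21, A22, B11, B12, B21, B22.
  unfold G. field. lra.
Qed.
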